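(* Let $\mathcal{X}=\{x_k\}_{k=1}^m$ be a frame for $\mathbb{C}^n$. Then the following are equivalent: (1) $\mathcal{X}$ is injective; (2) the vectors $\{\tilde{x}_k\}_{k=1}^m$ span $\mathbb{R}^{n^2}$.
   Context: A family $\{x_k\}$ of vectors in a Hilbert space is called injective if whenever a self-adjoint operator $T$ satisfies $\langle Tx_k,x_k\rangle=0$ for all $k$, then $T=0$. For $x=(x_1,\dots,x_n)\in\mathbb{C}^n$ define $\tilde{x}\in\mathbb{R}^{n^2}$ by $\tilde{x}=(|x_1|^2,\mathrm{Re}(\bar{x}_1x_2),\mathrm{Im}(\bar{x}_1x_2),\dots,\mathrm{Re}(\bar{x}_1x_n),\mathrm{Im}(\bar{x}_1x_n);\ |x_2|^2,\mathrm{Re}(\bar{x}_2x_3),\mathrm{Im}(\bar{x}_2x_3),\dots,\mathrm{Re}(\bar{x}_2x_n),\mathrm{Im}(\bar{x}_2x_n);\ \dots;\ |x_{n-1}|^2,\mathrm{Re}(\bar{x}_{n-1}x_n),\mathrm{Im}(\bar{x}_{n-1}x_n);\ |x_n|^2)$. *)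

(* Defs.v *)
From HB Require Import structures.
From mathcomp Require Import all_boot all_order all_algebra.
From mathcomp Require Import complex.
Set Implicit Arguments. Unset Strict Implicit. Unset Printing Implicit Defensive.
Import Order.TTheory GRing.Theory Num.Theory.
Local Open Scope ring_scope.

Definition cabs2 (R : rcfType) (z : R[i]) : R := complex.Re z ^+ 2 + complex.Im z ^+ 2.

Definition cinner (R : rcfType) (n : nat) (u v : 'cV[R[i]]_n) : R[i] :=
  \sum_(i < n) u i 0 * conjc (v i 0).

Definition cnorm2 (R : rcfType) (n : nat) (u : 'cV[R[i]]_n) : R :=
  \sum_(i < n) cabs2 (u i 0).

Definition is_frame (R : rcfType) (n m : nat) (X : 'I_m -> 'cV[R[i]]_n) : Prop :=
  exists A B : R, 0 < A /\ 0 < B /\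
    forall x : 'cV[R[i]]_n,
      A * cnorm2 x <= \sum_(k < m) cabs2 (cinner x (X k)) <= B * cnorm2 x.

Definition self_adjoint (R : rcfType) (n : nat) (T : 'M[R[i]]_n) : Prop :=
  forall i j, T j i = conjc (T i j).

Definition injective_family (R : rcfType) (n m : nat)
    (X : 'I_m -> 'cV[R[i]]_n) : Prop :=
  forall T : 'M[R[i]]_n, self_adjoint T ->
    (forall k, cinner (T *m X k) (X k) = 0) -> T = 0.

(* the sequence of coordinates of x~ in the order of the paper:
   |x_1|^2, Re(conj x_1 x_2), Im(conj x_1 x_2), ..., Re(conj x_1 x_n), Im(..);
   |x_2|^2, ... ; ... ; |x_n|^2   (0-indexed here) *)
Definition tilde_seq (R : rcfType) (n : nat) (x : 'cV[R[i]]_n) : seq R :=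
  let c := fun i : 'I_n => x i 0 in
  flatten [seq cabs2 (c i) ::
             flatten [seq [:: complex.Re (conjc (c i) * c j);
                              complex.Im (conjc (c i) * c j)]
                     | j : 'I_n <- filter (fun j : 'I_n => (i < j)%N) (enum 'I_n)]
          | i : 'I_n <- enum 'I_n].
(* (this sequence has length n + 2 * (n(n-1)/2) = n^2) *)

Definition tilde (R : rcfType) (n : nat) (x : 'cV[R[i]]_n) : 'rV[R]_(n * n) :=
  \row_(p < n * n) nth 0 (tilde_seq x) p.

(* the matrix whose k-th row is x~_k; its rows span R^(n^2) iff it is row_full *)
Definition tilde_mx (R : rcfType) (n m : nat) (X : 'I_m -> 'cV[R[i]]_n)
  : 'M[R]_(m, n * n) :=
  \matrix_(k < m) tilde (X k).

(* Main.v *)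
Require Import Defs.
From HB Require Import structures.
From mathcomp Require Import all_boot all_order all_algebra.
From mathcomp Require Import complex.
From mathcomp Require Import zify ring lra.
Import Order.TTheory GRing.Theory Num.Theory.
Set Implicit Arguments. Unset Strict Implicit.
Local Open Scope ring_scope.

Lemma uniq_flatten_map (S T : eqType) (f : S -> seq T) (s : seq S) :
  uniq s -> (forall x, x \in s -> uniq (f x)) ->
  (forall x y z, x \in s -> y \in s -> z \in f x -> z \in f y -> x = y) ->
  uniq (flatten (map f s)).
Proof.
elim: s => //= a s IH /andP[nas us] Hu Hd.
rewrite cat_uniq Hu ?mem_head //= IH //; last first.
- by move=> x y z xs ys; apply: Hd; rewrite in_cons ?xs ?ys orbT.
- by move=> x xs; apply: Hu; rewrite in_cons xs orbT.

rewrite andbT; apply/hasPn => z /flatten_mapP [y ys zy]; apply/negP => za.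
have ys' : y \in a :: s by rewrite in_cons ys orbT.
have ey := Hd a y z (mem_head _ _) ys' za zy.
by move: nas; rewrite ey ys.
Qed.

Section Labels.
Variable n : nat.
Definition lbl := ('I_n * 'I_n * nat)%type.

Definition labels : seq lbl :=
  flatten [seq (i, i, 0%N) ::
     flatten [seq [:: (i, j, 1%N); (i, j, 2%N)]
             | j <- filter (fun j : 'I_n => (i < j)%N) (enum 'I_n)]
   | i : 'I_n <- enum 'I_n].

Definition wf (l : lbl) : bool :=
  let: (a, b, c) := l in
  ((c == 0%N) && (a == b)) || (((c == 1%N) || (c == 2%N)) && (a < b)%N).

Lemma labels_wf l : l \in labels -> wf l.
Proof.
move=> /flatten_mapP [i _]; rewrite in_cons => /orP [/eqP -> /=|]; first by rewrite eqxx.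
move=> /flatten_mapP [j]; rewrite mem_filter => /andP [ij _].
by rewrite !inE => /orP [] /eqP -> /=; rewrite ij ?orbT ?andbT.
Qed.

Lemma labels_uniq : uniq labels.
Proof.
apply: uniq_flatten_map; first exact: enum_uniq.
- move=> i _ /=; apply/andP; split.
  + apply/negP => /flatten_mapP [j]; rewrite mem_filter => /andP [ij _].
    by rewrite !inE => /orP [] /eqP [] eji; rewrite -eji ltnn in ij.
  + apply: uniq_flatten_map.
    * by apply: filter_uniq; exact: enum_uniq.
    * by move=> j _ /=; rewrite inE andbT xpair_eqE andbF.
    * by move=> j k z _ _; rewrite !inE => /orP [] /eqP -> /orP [] /eqP [].
- move=> i k z _ _.
  have H : forall i : 'I_n, z \in (i, i, 0%N) :: flatten [seq [:: (i, j, 1%N); (i, j, 2%N)]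
             | j <- filter (fun j : 'I_n => (i < j)%N) (enum 'I_n)] -> z.1.1 = i.
    move=> i'; rewrite in_cons => /orP [/eqP -> //|].
    by move=> /flatten_mapP [j _]; rewrite !inE => /orP [] /eqP ->.
  by move=> /H <- /H.
Qed.

Lemma mem_labels0 (a : 'I_n) : (a, a, 0%N) \in labels.
Proof. by apply/flatten_mapP; exists a; rewrite ?mem_enum // mem_head. Qed.

Lemma mem_labels12 (a b : 'I_n) c : (a < b)%N -> (c == 1%N) || (c == 2%N) -> (a, b, c) \in labels.
Proof.
move=> ab hc; apply/flatten_mapP; exists a; rewrite ?mem_enum //.
rewrite in_cons; apply/orP; right; apply/flatten_mapP; exists b.
  by rewrite mem_filter ab mem_enum.
by rewrite !inE; case/orP: hc => /eqP ->; rewrite eqxx ?orbT.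
Qed.

Lemma size_pairs (T : Type) (S : Type) (f g : S -> T) (s : seq S) :
  size (flatten [seq [:: f j; g j] | j <- s]) = (2 * size s)%N.
Proof. elim: s => //= a s ->; lia. Qed.

Lemma count_gt_iota i k : count (fun j => (i < j)%N) (iota 0 k) = (k - i.+1)%N.
Proof.
elim: k => // k IH; rewrite -[k.+1]addn1 iotaD count_cat IH /= add0n.
case: (ltnP i k) => ik; lia.
Qed.

Lemma sumn_aux N k : (k <= N)%N ->
  (sumn [seq (1 + 2 * (N - i.+1))%N | i <- iota 0 k] + k * k = 2 * N * k)%N.
Proof.
elim: k => [|k IH] hk.
  rewrite /=; lia.
rewrite -[k.+1]addn1 iotaD map_cat sumn_cat /= add0n addn0.
have := IH (ltnW hk); nia.
Qed.

Lemma size_labels : size labels = (n * n)%N.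
Proof.
rewrite size_flatten /shape -map_comp.
have -> : [seq (size \o (fun i : 'I_n => (i, i, 0%N) :: flatten [seq [:: (i, j, 1%N); (i, j, 2%N)]
             | j <- filter (fun j : 'I_n => (i < j)%N) (enum 'I_n)])) i | i <- enum 'I_n]
  = [seq (1 + 2 * (n - i.+1))%N | i <- map val (enum 'I_n)].
  rewrite -map_comp; apply: eq_map => i /=.
  rewrite size_pairs size_filter -[in RHS](count_gt_iota i n) -val_enum_ord count_map.
  by rewrite add1n.
rewrite val_enum_ord; have := sumn_aux (leqnn n); lia.
Qed.

End Labels.


Section Mx.
Variables (R : rcfType) (n : nat).
Local Notation C := (R[i]).
Local Open Scope complex_scope.
Local Open Scope ring_scope.

Lemma cinnerD (u v x : 'cV[C]_n) : cinner (u + v) x = cinner u x + cinner v x.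
Proof. by rewrite /cinner -big_split /=; apply: eq_bigr => i _; rewrite mxE mulrDl. Qed.

Lemma cinnerZ z (u x : 'cV[C]_n) : cinner (z *: u) x = z * cinner u x.
Proof. by rewrite /cinner mulr_sumr; apply: eq_bigr => i _; rewrite mxE mulrA. Qed.

Lemma cinner_sum k (F : 'I_k -> 'cV[C]_n) x :
  cinner (\sum_(p < k) F p) x = \sum_(p < k) cinner (F p) x.
Proof.
rewrite /cinner exchange_big /=; apply: eq_bigr => i _.
by rewrite summxE mulr_suml.
Qed.

Lemma sum_delta (T : nzRingType) (b : 'I_n) (f : 'I_n -> T) :
  \sum_(j < n) ((j == b)%:R * f j) = f b.
Proof.
rewrite (bigD1 b) //= eqxx mul1r big1 ?addr0 // => j /negbTE ->; by rewrite mul0r.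
Qed.

Lemma cinner_delta (a b : 'I_n) (x : 'cV[C]_n) :
  cinner (delta_mx a b *m x) x = x b 0 * conjc (x a 0).
Proof.
rewrite /cinner.
transitivity (\sum_(i < n) (i == a)%:R * (x b 0 * conjc (x i 0))).
  apply: eq_bigr => i _; rewrite mxE.
  under eq_bigr do rewrite mxE.
  case: (i =P a) => [-> | _] /=.
    by rewrite (sum_delta b (fun j => x j 0)) mul1r.
  by rewrite mul0r big1 ?mul0r // => j _; rewrite mul0r.
by rewrite (sum_delta a (fun i => x b 0 * conjc (x i 0))).
Qed.


Definition zc (c : nat) : C :=
  if c == 1%N then (2^-1 +i* 0)%C else if c == 2%N then (0 +i* (- 2^-1))%C else 1.

Definition E (l : lbl n) : 'M[C]_n :=
  let: (a, b, c) := l in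
  if c == 0%N then delta_mx a a
  else zc c *: delta_mx a b + conjc (zc c) *: delta_mx b a.

Definition evl (l : lbl n) (x : 'cV[C]_n) : R :=
  let: (a, b, c) := l in
  if c == 0%N then cabs2 (x a 0)
  else if c == 1%N then complex.Re (conjc (x a 0) * x b 0)
  else complex.Im (conjc (x a 0) * x b 0).

Lemma cinnerE l x : wf l -> cinner (E l *m x) x = (evl l x)%:C.
Proof.
case: l => [[a b] c] /= /orP [/andP [/eqP -> /eqP <-] | /andP [hc ab]].
  rewrite cinner_delta /cabs2; case: (x a 0) => p q; simpc; congr Complex; ring.
have c0 : (c == 0%N) = false by case/orP: hc => /eqP ->.
rewrite c0 mulmxDl -!scalemxAl cinnerD !cinnerZ !cinner_delta.
case/orP: hc => /eqP -> /=; case: (x a 0) => p q; case: (x b 0) => r s; rewrite /zc /=;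
  simpc; congr Complex; by field.
Qed.

Lemma E_sa l : wf l -> self_adjoint (E l).
Proof.
case: l => [[a b] c] /= /orP [/andP [/eqP -> _] | /andP [hc ab]] i j.
  by rewrite !mxE conjc_nat andbC.
have c0 : (c == 0%N) = false by case/orP: hc => /eqP ->.
rewrite c0 !mxE rmorphD !rmorphM /= conjcK !conjc_nat addrC.
by rewrite [(j == a) && _]andbC [(j == b) && _]andbC.
Qed.

Definition phi (l : lbl n) (T : 'M[C]_n) : R :=
  let: (a, b, c) := l in
  if c == 0%N then complex.Re (T a b)
  else if c == 1%N then 2 * complex.Re (T a b) else - (2 * complex.Im (T a b)).

Lemma phiD l A B : phi l (A + B) = phi l A + phi l B.
Proof.
case: l => [[a b] c] /=; rewrite !mxE; case: (A a b) => p q; case: (B a b) => r s.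
by case: ifP => _; [|case: ifP => _]; simpc; rewrite /=; ring.
Qed.

Lemma phiN l A : phi l (- A) = - phi l A.
Proof.
case: l => [[a b] c] /=; rewrite !mxE; case: (A a b) => p q.
by case: ifP => _; [|case: ifP => _]; simpc; rewrite /=; ring.
Qed.

Lemma phi0 l : phi l 0 = 0.
Proof.
case: l => [[a b] c] /=; rewrite !mxE.
by case: ifP => _; [|case: ifP => _]; simpc; rewrite /=; ring.
Qed.

Lemma phiZ l r A : phi l (r%:C *: A) = r * phi l A.
Proof.
case: l => [[a b] c] /=; rewrite !mxE; case: (A a b) => p q.
by case: ifP => _; [|case: ifP => _]; simpc; rewrite /=; ring.
Qed.

Lemma phi_sum l k (F : 'I_k -> 'M[C]_n) :
  phi l (\sum_(q < k) F q) = \sum_(q < k) phi l (F q).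
Proof.
elim/big_rec2: _ => [|q y M _ <-]; first exact: phi0.
exact: phiD.
Qed.

Lemma Eab a' b' c' (a b : 'I_n) : wf (a', b', c') -> (a <= b)%N ->
  E (a', b', c') a b =
  if (a == a') && (b == b') then (if c' == 0%N then 1 else zc c') else 0.
Proof.
move=> /orP [/andP [/eqP -> /eqP <-] | /andP [hc ab']] hab /=.
  by rewrite mxE; case: ((a == a') && (b == a')).
have c0 : (c' == 0%N) = false by case/orP: hc => /eqP ->.
rewrite c0 !mxE.
have -> : (a == b') && (b == a') = false.
  by apply/negP => /andP [/eqP ea /eqP eb]; subst; lia.
rewrite mulr0 addr0; case: ((a == a') && (b == b')); by rewrite ?mulr1 ?mulr0.
Qed.

Lemma wf_le (a b : 'I_n) (c : nat) : wf (a, b, c) -> (a <= b)%N.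
Proof. by move=> /orP [/andP [_ /eqP ->] | /andP [_ /ltnW]]. Qed.

Lemma phiE l l' : wf l -> wf l' -> phi l (E l') = (l == l')%:R.
Proof.
case: l => [[a b] c]; case: l' => [[a' b'] c'] wl wl'.
rewrite /phi Eab // ?(wf_le wl) // !xpair_eqE.
case: (a =P a') => [ea|_]; last by case: ifP => _; [|case: ifP => _]; rewrite /= ?mulr0 ?oppr0.
case: (b =P b') => [eb|_]; last by case: ifP => _; [|case: ifP => _]; rewrite /= ?mulr0 ?oppr0.
subst a' b'; rewrite /=.
move: wl wl' => /orP [/andP [/eqP -> /eqP eab] | /andP [hc ab]].
  subst b; move=> /orP [/andP [/eqP -> _] | /andP [_]]; first by rewrite eqxx.
  by rewrite ltnn.
move=> /orP [/andP [_ /eqP eab] | /andP [hc' _]].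
  by subst b; rewrite ltnn in ab.
by case/orP: hc => /eqP ->; case/orP: hc' => /eqP -> /=; rewrite /zc /=; simpc; rewrite /= ?mulrN ?opprK ?divff ?mulVf ?pnatr_eq0.
Qed.
End Mx.


Lemma row_full_ker (F : fieldType) m N (A : 'M[F]_(m, N)) :
  row_full A <-> (forall v : 'cV_N, A *m v = 0 -> v = 0).
Proof.
split.
  by move=> hf v hv; apply: (row_full_inj hf); rewrite hv mulmx0.
move=> H; rewrite /row_full -mxrank_tr; apply: inj_row_free => u hu.
have h : A *m u^T = 0 by rewrite -[A]trmxK -trmx_mul hu trmx0.
by rewrite -[u]trmxK (H _ h) trmx0.
Qed.

Section Main.
Local Open Scope complex_scope.
Local Open Scope ring_scope.
Variables (R : rcfType) (n' : nat).
Local Notation n := n'.+1.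
Local Notation C := (R[i]).

Definition lab (p : nat) : lbl n := nth (ord0, ord0, 0%N) (labels n) p.

Lemma lab_in (p : 'I_(n * n)) : lab p \in labels n.
Proof. by apply: mem_nth; rewrite size_labels. Qed.

Lemma lab_wf (p : 'I_(n * n)) : wf (lab p).
Proof. exact/labels_wf/lab_in. Qed.

Lemma tilde_seqE (x : 'cV[C]_n) : tilde_seq x = map (fun l => evl l x) (labels n).
Proof.
rewrite /labels map_flatten -map_comp /tilde_seq; congr flatten.
apply: eq_map => i /=.
rewrite map_flatten -map_comp; congr (_ :: flatten _); apply: eq_map => j //.
Qed.

Lemma tildeE (x : 'cV[C]_n) (p : 'I_(n * n)) : tilde x 0 p = evl (lab p) x.
Proof.
by rewrite mxE tilde_seqE (nth_map (ord0, ord0, 0%N)) // size_labels.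
Qed.

Definition Tm (v : 'cV[R]_(n * n)) : 'M[C]_n :=
  \sum_(p < n * n) (v p 0)%:C *: E R (lab p).

Definition coef (T : 'M[C]_n) : 'cV[R]_(n * n) := \col_p phi (lab p) T.


Lemma Tm_sa v : self_adjoint (Tm v).
Proof.
move=> i j; rewrite !summxE rmorph_sum; apply: eq_bigr => p _.
by rewrite !mxE rmorphM /= oppr0 (E_sa _ (lab_wf p)).
Qed.

Lemma cinner_Tm v (x : 'cV[C]_n) : cinner (Tm v *m x) x = ((tilde x *m v) 0 0)%:C.
Proof.
rewrite /Tm mulmx_suml cinner_sum mxE rmorph_sum; apply: eq_bigr => p _.
by rewrite -scalemxAl cinnerZ (cinnerE _ (lab_wf p)) tildeE rmorphM mulrC.
Qed.

Lemma coefK v : coef (Tm v) = v.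
Proof.
apply/matrixP => p j; rewrite (ord1 j) mxE /Tm phi_sum.
under eq_bigr do rewrite phiZ (phiE _ (lab_wf p) (lab_wf _)).
rewrite (bigD1 p) //= eqxx mulr1 big1 ?addr0 // => q qp.
rewrite /lab nth_uniq ?size_labels ?labels_uniq //.
by case: eqP => [/val_inj pq|_]; [move: qp; rewrite pq eqxx | rewrite mulr0].
Qed.

Lemma coefB A B : coef (A - B) = coef A - coef B.
Proof. by apply/matrixP => p j; rewrite !mxE phiD phiN. Qed.

Lemma coef0 : coef 0 = 0.
Proof. by apply/matrixP => p j; rewrite !mxE phi0. Qed.

Lemma Tm0 : Tm 0 = 0.
Proof. by rewrite /Tm big1 // => p _; rewrite mxE rmorph0 scale0r. Qed.

Lemma coef_eq0 T : self_adjoint T -> coef T = 0 -> T = 0.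
Proof.
move=> sa hc.
have H l : l \in labels n -> phi l T = 0.
  move=> hl; have hp : (index l (labels n) < n * n)%N by rewrite -size_labels index_mem.
  have := congr1 (fun M : 'cV[R]_(n * n) => M (Ordinal hp) 0) hc.
  by rewrite !mxE /lab nth_index.
have Hle (i j : 'I_n) : (i <= j)%N -> T i j = 0.
  rewrite leq_eqVlt => /orP [/eqP /val_inj <-|ij].
    have := H _ (mem_labels0 i); rewrite /= => hre.
    have := sa i i; move: hre; case: (T i i) => p q /= -> [] hq.
    by apply/eqP; rewrite eq_complex /= eqxx /=; apply/eqP; lra.
  have := H _ (mem_labels12 ij (isT : (1 == 1%N) || (1 == 2%N))).
  have := H _ (mem_labels12 ij (isT : (2 == 1%N) || (2 == 2%N))).
  rewrite /=; case: (T i j) => p q /= h2 h1.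
  by apply/eqP; rewrite eq_complex /=; apply/andP; split; apply/eqP; lra.
apply/matrixP => i j; rewrite mxE; case: (leqP i j) => [/Hle //|/ltnW ji].
by rewrite sa (Hle _ _ ji) conjc0.
Qed.

Lemma Tm_coef T : self_adjoint T -> Tm (coef T) = T.
Proof.
move=> sa; apply/esym/subr0_eq/coef_eq0.
  by move=> i j; rewrite !mxE rmorphB /= sa (Tm_sa (coef T) i j).
by rewrite coefB coefK subrr.
Qed.

End Main.

Lemma tildemxE (R : rcfType) n m (X : 'I_m -> 'cV[R[i]]_n) (v : 'cV[R]_(n * n)) (k : 'I_m) :
  (tilde_mx X *m v) k 0 = (tilde (X k) *m v) 0 0.
Proof. by rewrite !mxE; apply: eq_bigr => p _; rewrite mxE. Qed.

Theorem mainTheorem2 (R : rcfType) (n m : nat) (X : 'I_m -> 'cV[R[i]]_n) :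
  is_frame X ->
  (injective_family X <-> row_full (tilde_mx X)).
Proof.
move=> _; case: n X => [|n'] X.
  split=> _.
    by have := rank_leq_col (tilde_mx X); rewrite /row_full; lia.
  by move=> T _ _; apply/matrixP => [[]].
split.
  move=> Hinj; apply/row_full_ker => v hv.
  have T0 : Tm v = 0.
    apply: Hinj; first exact: Tm_sa.
    by move=> k; rewrite cinner_Tm -tildemxE hv mxE rmorph0.
  by rewrite -(coefK v) T0 coef0.
move=> /row_full_ker H T sa hz.
have hc : coef T = 0.
  apply: H; apply/matrixP => k j; rewrite (ord1 j) [RHS]mxE.
  apply: (@complexI R); rewrite rmorph0 tildemxE -cinner_Tm Tm_coef //.
by rewrite -(Tm_coef sa) hc Tm0.
Qed.
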